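(* Let $p$ be a prime, $K$ a finite extension of $\mathbf Q_p$, and let $\nu$ be the valuation on $\mathbf C_p$ normalized by $\nu(p)=1$, $|\cdot|$ the corresponding absolute value. Let $$f(t,x)=x^n+c_{n-1}(t)x^{n-1}+\cdots+c_1(t)x+c_0(t),\qquad c_i(t)\in\mathcal O_K[[t]],$$ and consider the map $\pi$ from the locus $\{(t,x): |t|<1,\ |x|<1,\ f(t,x)=0\}$ to the open unit $t$-disk, $(t,x)\mapsto t$. Assume that $x=0$ is a simple root of $f(0,x)$ (the point $b$), let $D_{vert}$ denote the nonempty set of the remaining roots of $f(0,x)$ in the open unit disk $\{|x|<1\}$, let $e$ be the number of roots of $f(0,x)$ with $|x|<1$ counted with multiplicity (so $e=1+\#D_{vert}$ when these roots are simple), and let $v_{vert}:=\max_{x'\in D_{vert}}\nu(x')$. Then for every $t'\in\mathbf C_p$ with $|t'|<|p^{e\cdot v_{vert}}|$ there is exactly one $x'\in\mathbf C_p$ with $|x'|<|p^{v_{vert}}|$ and $f(t',x')=0$.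
   Context: This is the local description of the map from a formal neighbourhood of a point $b$ on a (smooth at $b_p$) modular curve to the $j$-line with parameter $t=j-j_E$: $x$ is a formal parameter at $b$ with $x(b)=0$, and $D_{vert}$ is the set of other points of the formal fibre over $t=0$. $\mathbf D(r,x)$ denotes the open disk $\{|x|<r\}$. *)

(* Defs.v *)
From HB Require Import structures.
From mathcomp Require Import all_boot all_order all_algebra.
From mathcomp Require Import reals.
Set Implicit Arguments. Unset Strict Implicit. Unset Printing Implicit Defensive.
Import Order.TTheory GRing.Theory Num.Theory.
Local Open Scope ring_scope.

Definition is_nonarch_abs (R : realType) (C : fieldType) (absv : C -> R) : Prop :=
  [/\ forall x, 0 <= absv x,
      forall x, absv x = 0 <-> x = 0,
      forall x y, absv (x * y) = absv x * absv y &
      forall x y, absv (x + y) <= Num.max (absv x) (absv y)].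

Definition abs_complete (R : realType) (C : fieldType) (absv : C -> R) : Prop :=
  forall u : nat -> C,
    (forall eps : R, 0 < eps -> exists N, forall m k, (N <= m)%N -> (N <= k)%N ->
        absv (u m - u k) < eps) ->
    exists l, forall eps : R, 0 < eps -> exists N, forall m, (N <= m)%N ->
        absv (u m - l) < eps.

Definition algebraic_over_Q (C : fieldType) (x : C) : Prop :=
  exists q : {poly rat}, q != 0 /\ root (map_poly ratr q) x.

(* (C, absv) is (isometrically isomorphic to) C_p with |p| = p^-1, i.e. the
   valuation nu = -log_p |.| has nu(p) = 1: C is algebraically closed
   (closedFieldType), complete for the non-archimedean absolute value absv,
   |p| = 1/p (so absv restricts to the p-adic absolute value on Q, by
   Ostrowski), and the algebraic numbers are dense in C (so C is the
   completion of an algebraic closure of Q_p). *)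
Definition is_Cp (p : nat) (R : realType) (C : closedFieldType) (absv : C -> R) : Prop :=
  [/\ is_nonarch_abs absv,
      abs_complete absv,
      absv (p%:R) = (p%:R)^-1 &
      forall x (eps : R), 0 < eps -> exists y, algebraic_over_Q y /\ absv (x - y) < eps].

(* Elements of Q_p inside C: limits of rationals. *)
Definition in_Qp (R : realType) (C : fieldType) (absv : C -> R) (x : C) : Prop :=
  forall eps : R, 0 < eps -> exists q : rat, absv (x - ratr q) < eps.

Definition finite_ext_Qp (R : realType) (C : fieldType) (absv : C -> R) (K : C -> Prop) : Prop :=
  [/\ (forall x, in_Qp absv x -> K x),
      (forall x y, K x -> K y -> K (x + y) /\ K (x * y) /\ K (- x)),
      (forall x, K x -> K (x^-1)) &
      exists b : seq C, (forall y, y \in b -> K y) /\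
        forall x, K x -> exists a : nat -> C, (forall i, in_Qp absv (a i)) /\
           x = \sum_(i < size b) a i * b`_i].

Definition in_OK (R : realType) (C : fieldType) (absv : C -> R) (K : C -> Prop) (x : C) : Prop :=
  K x /\ absv x <= 1.

Definition pseries_to (R : realType) (C : fieldType) (absv : C -> R)
  (a : nat -> C) (t l : C) : Prop :=
  forall eps : R, 0 < eps -> exists N, forall m, (N <= m)%N ->
    absv (\sum_(k < m) a k * t ^+ k - l) < eps.

(* f(t, x) = x^n + sum_{i<n} c_i(t) x^i vanishes, where c_i(t) = sum_k c i k t^k. *)
Definition f_vanishes (R : realType) (C : fieldType) (absv : C -> R)
  (n : nat) (c : 'I_n -> nat -> C) (t x : C) : Prop :=
  exists s : 'I_n -> C, (forall i, pseries_to absv (c i) t (s i)) /\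
    x ^+ n + \sum_(i < n) s i * x ^+ i = 0.

Definition f_at0 (C : fieldType) (n : nat) (c : 'I_n -> nat -> C) : {poly C} :=
  'X^n + \sum_(i < n) (c i 0%N)%:P * 'X^i.

(* Main.v *)
Require Import Defs.
From HB Require Import structures.
From mathcomp Require Import all_boot all_order all_algebra.
From mathcomp Require Import reals.
From mathcomp Require Import ring lra.
Import Order.TTheory GRing.Theory Num.Theory.
Local Open Scope ring_scope.

Section AbsV.
Context {R : realType} {C : fieldType} {absv : C -> R}.
Context (hA : is_nonarch_abs absv).

Lemma ab_ge0 x : 0 <= absv x. Proof. by case: hA. Qed.
Lemma ab_eq0 x : absv x = 0 <-> x = 0. Proof. by case: hA. Qed.
Lemma abM x y : absv (x * y) = absv x * absv y. Proof. by case: hA. Qed.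
Lemma abD x y : absv (x + y) <= Num.max (absv x) (absv y). Proof. by case: hA. Qed.
Lemma ab0 : absv 0 = 0. Proof. exact/ab_eq0. Qed.
Lemma ab1 : absv 1 = 1.
Proof.
have h : absv 1 = absv 1 * absv 1 by rewrite -abM mulr1.
have h0 : absv 1 != 0 by apply/eqP => /ab_eq0/eqP; rewrite oner_eq0.
by apply: (mulfI h0); rewrite mulr1 -h.
Qed.
Lemma abN1 : absv (-1) = 1.
Proof.
have h : absv (-1) * absv (-1) = 1 by rewrite -abM mulrNN mulr1 ab1.
have := ab_ge0 (-1); nra.
Qed.
Lemma abN x : absv (- x) = absv x.
Proof. by rewrite -mulN1r abM abN1 mul1r. Qed.
Lemma abB x y : absv (x - y) = absv (y - x).
Proof. by rewrite -abN opprB. Qed.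
Lemma abX x k : absv (x ^+ k) = absv x ^+ k.
Proof. elim: k => [|k IH]; by rewrite ?expr0 ?ab1 // !exprS abM IH. Qed.
Lemma abD_le x y B : absv x <= B -> absv y <= B -> absv (x + y) <= B.
Proof. move=> hx hy; apply: le_trans (abD x y) _; by rewrite ge_max hx hy. Qed.
Lemma abD_lt x y B : absv x < B -> absv y < B -> absv (x + y) < B.
Proof. move=> hx hy; apply: le_lt_trans (abD x y) _; by rewrite gt_max hx hy. Qed.
Lemma ab_iso x y : absv y < absv x -> absv (x + y) = absv x.
Proof.
move=> hyx; apply/eqP; rewrite eq_le; apply/andP; split.
  by apply: abD_le => //; apply: ltW.
have : absv x <= Num.max (absv (x + y)) (absv (- y)).
  by have := abD (x + y) (- y); rewrite addrK.
rewrite abN le_max => /orP[//|h]; by move: (lt_le_trans hyx h); rewrite ltxx.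
Qed.
Lemma ab_sum (I : Type) (r : seq I) (P : pred I) (F : I -> C) B :
  0 <= B -> (forall i, P i -> absv (F i) <= B) -> absv (\sum_(i <- r | P i) F i) <= B.
Proof.
move=> B0 hF; apply: (big_ind (fun v => absv v <= B)) => //.
- by rewrite ab0.
- by move=> ? ? ? ?; apply: abD_le.
Qed.
Lemma ab_prod (I : Type) (r : seq I) (P : pred I) (F : I -> C) :
  absv (\prod_(i <- r | P i) F i) = \prod_(i <- r | P i) absv (F i).
Proof. exact: (big_morph absv abM ab1). Qed.

Lemma le_of_eps (x y : R) : 0 <= y -> (forall eps, 0 < eps -> x <= Num.max eps y) -> x <= y.
Proof.
move=> y0 h; rewrite leNgt; apply/negP => yx.
have := h ((x + y) / 2) ltac:(lra); rewrite le_max => /orP[] ?; lra.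
Qed.

Lemma xpow_diff (x y : C) k : absv x <= 1 -> absv y <= 1 ->
  absv (x ^+ k - y ^+ k) <= absv (x - y).
Proof.
move=> hx hy; elim: k => [|k IH]; first by rewrite !expr0 subrr ab0 ab_ge0.
have -> : x ^+ k.+1 - y ^+ k.+1 = x * (x ^+ k - y ^+ k) + (x - y) * y ^+ k.
  by rewrite !exprS; ring.
apply: abD_le; rewrite abM.
  have := ab_ge0 (x ^+ k - y ^+ k); have := ab_ge0 x; nra.
rewrite abX; have := exprn_ile1 k (ab_ge0 y) hy; have := ab_ge0 (x - y);
  have := ab_ge0 y; nra.
Qed.


Lemma geo {q eps : R} : 0 <= q -> q < 1 -> 0 < eps -> exists N, q ^+ N < eps.
Proof.
move=> q0 q1 e0; have [->|qn0] := eqVneq q 0; first by exists 1%N; rewrite expr1.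
have qp : 0 < q by rewrite lt_def qn0 q0.
pose d := q^-1 - 1.
have dp : 0 < d by rewrite /d subr_gt0 invf_gt1.
have bern : forall N, 1 + N%:R * d <= (q^-1) ^+ N.
  elim=> [|N IH]; first by rewrite expr0 mul0r addr0.
  rewrite exprS -natr1 /=.
  have : q^-1 = 1 + d by rewrite /d addrC subrK.
  move=> e; rewrite e in IH *.
  have hd := dp; have h0 : 0 <= N%:R :> R by [].
  have h1 : 0 <= (1 + d) ^+ N by apply: exprn_ge0; lra.
  have h2 : 0 <= N%:R * d * d by rewrite -mulrA; apply: mulr_ge0 => //; apply: mulr_ge0; lra.
  nra.
pose N := Num.bound ((eps * d)^-1).
have hN := @archi_boundP R ((eps * d)^-1) ltac:(rewrite invr_ge0; nra).
exists N; rewrite -(invrK q) exprVn.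
have hpos : 0 < (q^-1) ^+ N by apply: exprn_gt0; rewrite invr_gt0.
rewrite -[eps]invrK ltf_pV2 ?posrE ?invr_gt0 //.
apply: lt_le_trans (bern N).
have ed : 0 < eps * d by apply: mulr_gt0.
have h1 : 1 < N%:R * (eps * d).
  by have h := hN; rewrite -(ltr_pM2r ed) mulVf ?lt0r_neq0 in h.
have h2 : eps^-1 * 1 < eps^-1 * (N%:R * (eps * d)) by rewrite ltr_pM2l ?invr_gt0.
have e2 : eps^-1 * (N%:R * (eps * d)) = N%:R * d by field; rewrite lt0r_neq0.
rewrite e2 mulr1 in h2; lra.
Qed.


Lemma ps_diff (a : nat -> C) t : (forall k, absv (a k) <= 1) -> absv t <= 1 ->
  forall m k, (k <= m)%N ->
  absv (\sum_(j < m) a j * t ^+ j - \sum_(j < k) a j * t ^+ j) <= absv t ^+ k.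
Proof.
move=> ha ht; elim=> [|m IH] k.
  by rewrite leqn0 => /eqP ->; rewrite subrr ab0 exprn_ge0 // ab_ge0.
rewrite leq_eqVlt => /orP[/eqP ->|]; first by rewrite subrr ab0 exprn_ge0 // ab_ge0.
rewrite ltnS => km; rewrite big_ord_recr /= addrAC.
apply: abD_le; first exact: IH.
rewrite abM abX; apply: le_trans (_ : absv t ^+ m <= _).
  have := ha m; have := ab_ge0 (a m); have := exprn_ge0 m (ab_ge0 t); nra.
exact: ler_wiXn2l (ab_ge0 t) ht _ _ km.
Qed.

Lemma ps_exists (a : nat -> C) t : abs_complete absv ->
  (forall k, absv (a k) <= 1) -> absv t < 1 -> exists l, pseries_to absv a t l.
Proof.
move=> hc ha ht.
suff hcau : forall eps : R, 0 < eps -> exists N, forall m k, (N <= m)%N -> (N <= k)%N ->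
    absv ((fun m => \sum_(j < m) a j * t ^+ j) m - (fun m => \sum_(j < m) a j * t ^+ j) k) < eps.
  by have [l hl] := hc _ hcau; exists l.
move=> eps e0 /=; have [N hN] := geo (ab_ge0 t) ht e0.
exists N => m k hm hk.
have ht1 : absv t <= 1 by apply: ltW.
have mono : forall j, (N <= j)%N -> absv t ^+ j <= absv t ^+ N.
  by move=> j hj; apply: ler_wiXn2l (ab_ge0 t) ht1 _ _ hj.
case: (leqP k m) => km.
  exact: le_lt_trans (ps_diff a t ha ht1 _ _ km) (le_lt_trans (mono _ hk) hN).
rewrite abB.
exact: le_lt_trans (ps_diff a t ha ht1 _ _ (ltnW km)) (le_lt_trans (mono _ hm) hN).
Qed.

Lemma ps_unique (a : nat -> C) t l1 l2 :
  pseries_to absv a t l1 -> pseries_to absv a t l2 -> l1 = l2.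
Proof.
move=> h1 h2; apply/eqP; rewrite -subr_eq0; apply/eqP/ab_eq0/eqP.
rewrite eq_le ab_ge0 andbT; apply: le_of_eps => // eps e0.
have [N1 hN1] := h1 eps e0; have [N2 hN2] := h2 eps e0.
have := hN1 (maxn N1 N2) (leq_maxl _ _); have := hN2 (maxn N1 N2) (leq_maxr _ _).
set S := \sum_(_ < _) _ => p2 p1.
have -> : l1 - l2 = (S - l2) + - (S - l1) by ring.
rewrite le_max; apply/orP; left; apply: abD_le; rewrite ?abN; exact: ltW.
Qed.

Lemma ps_bound (a : nat -> C) t l : (forall k, absv (a k) <= 1) -> absv t < 1 ->
  pseries_to absv a t l -> absv (l - a 0%N) <= absv t.
Proof.
move=> ha ht hl; apply: le_of_eps; first exact: ab_ge0.
move=> eps e0; have [N hN] := hl eps e0.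
have := hN (maxn N 1) (leq_maxl _ _).
have := ps_diff a t ha (ltW ht) _ _ (leq_maxr N 1).
rewrite big_ord1 expr0 mulr1 expr1.
set S := \sum_(_ < _) _ => p1 p2.
have -> : l - a 0%N = - (S - l) + (S - a 0%N) by ring.
apply: le_trans (abD _ _) _; rewrite abN.
rewrite ge_max !le_max (ltW p2) p1 /= orbT //.
Qed.


Lemma abD_sc (r M : R) u v : 0 <= r -> r * absv u <= M -> r * absv v <= M ->
  r * absv (u + v) <= M.
Proof.
move=> r0 hu hv; have := abD u v; rewrite le_max => /orP[] h.
  by apply: le_trans hu; rewrite ler_wpM2l.
by apply: le_trans hv; rewrite ler_wpM2l.
Qed.

Lemma est_prod (l : seq C) (r : R) x y : 0 < r -> (forall z, z \in l -> r <= absv z) ->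
  absv x < r -> absv y < r ->
  absv (\prod_(z <- l) (x - z)) = \prod_(z <- l) absv z /\
  r * absv (\prod_(z <- l) (x - z) - \prod_(z <- l) (y - z)) <= absv (x - y) * \prod_(z <- l) absv z.
Proof.
move=> r0 hl hx hy; elim: l hl => [|z l IH] hl.
  by rewrite !big_nil ab1 subrr ab0 mulr0 mulr1 ab_ge0.
have [IH1 IH2] := IH (fun w hw => hl w ltac:(by rewrite inE hw orbT)).
have hz : r <= absv z by apply: hl; rewrite inE eqxx.
have ex : forall w, absv w < r -> absv (w - z) = absv z.
  move=> w hw; rewrite addrC ab_iso ?abN //; exact: lt_le_trans hw hz.
rewrite !big_cons; split; first by rewrite abM ex // IH1.
set A := \prod_(_ <- _) (x - _); set B := \prod_(_ <- _) (y - _).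
set Pl := \prod_(_ <- _) absv _.
have -> : (x - z) * A - (y - z) * B = (x - y) * A + (y - z) * (A - B) by ring.
have hPl : 0 <= Pl by rewrite /Pl -IH1 ab_ge0.
apply: abD_sc; first exact: ltW.
  rewrite abM /A IH1 -/Pl; have := ab_ge0 (x - y); move=> h; have h2 := mulr_ge0 h hPl; nra.
rewrite abM ex //; move: IH2; rewrite -/A -/B -/Pl => IH2; have := ab_ge0 z; have := ab_ge0 (x - y); nra.
Qed.

End AbsV.

Section Poly.
Context {C : closedFieldType}.

Definition poly_of {n} (d : 'I_n -> C) : {poly C} := 'X^n + \sum_(i < n) (d i)%:P * 'X^i.

Lemma horner_poly_of {n} (d : 'I_n -> C) x :
  (poly_of d).[x] = x ^+ n + \sum_(i < n) d i * x ^+ i.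
Proof.
rewrite /poly_of hornerD hornerXn horner_sum; congr (_ + _).
by apply: eq_bigr => i _; rewrite hornerCM hornerXn.
Qed.

Lemma poly_of_split {n} (d : 'I_n -> C) :
  exists rs, poly_of d = \prod_(z <- rs) ('X - z%:P).
Proof.
have [rs h] := closed_field_poly_normal (poly_of d); exists rs.
suff hl : lead_coef (poly_of d) = 1 by rewrite hl scale1r in h.
rewrite /poly_of lead_coefDl ?lead_coefXn // size_polyXn ltnS.
apply: (big_ind (fun p : {poly C} => (size p <= n)%N)) => //.
- by rewrite size_poly0.
- by move=> p q hp hq; apply: leq_trans (size_add p q) _; rewrite geq_max hp hq.
- move=> i _; rewrite mul_polyC; apply: leq_trans (size_scale_leq _ _) _.
  by rewrite size_polyXn.
Qed.

Lemma horner_split (rs : seq C) x :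
  (\prod_(z <- rs) ('X - z%:P)).[x] = \prod_(z <- rs) (x - z).
Proof. by rewrite horner_prod; apply: eq_bigr => z _; rewrite hornerXsubC. Qed.

End Poly.

Section Ar.
Context {R : realType}.
Lemma arL1 (ay A r D P : R) : 0 <= ay -> ay < r -> 0 <= A -> r * A <= D * P -> 0 < D -> 0 < P -> ay * A < D * P.
Proof.
move=> h1 h2 h3 h4 h5 h6; have h7 : 0 < D * P by apply: mulr_gt0.
move: h3; rewrite le_eqVlt => /orP[/eqP <-|h3]; first by rewrite mulr0.
have : ay * A < r * A by rewrite ltr_pM2r.
lra.
Qed.
Lemma arL2 (a t z : R) : 0 <= a -> a <= t -> 0 <= z -> z <= 1 -> a * z <= t.
Proof. move=> *; nra. Qed.
Lemma arL3 (X P r g t : R) : 0 <= X -> X ^+ 2 * P = r * g -> g <= t -> t < r * P -> 0 < r -> 0 < P -> X < r.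
Proof.
move=> h1 h2 h3 h4 h5 h6; rewrite ltNge; apply/negP => h.
have h7 : r * r <= X * X by apply: ler_pM => //; apply: ltW.
have h8 : r * r * P <= X * X * P by rewrite ler_pM2r.
have h9 : r * g < r * (r * P) by rewrite ltr_pM2l //; lra.
rewrite expr2 in h2; lra.
Qed.
Lemma arL4 (X P r g t : R) : 0 <= X -> 0 < P -> 0 < r -> X ^+ 2 * P = r * g -> X * P <= g ->
  g <= t -> t < r * P -> 0 < g -> False.
Proof.
move=> h1 h2 h3 h4 h5 h6 h7 h8.
have h9 : (X * P) * (X * P) <= g * g by apply: ler_pM => //; apply: mulr_ge0 => //; apply: ltW.
have h10 : X * P * (X * P) = r * g * P by rewrite -h4; ring.
rewrite h10 in h9.
have h11 : g * (r * P) <= g * g by rewrite mulrA [g * r]mulrC.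
have : r * P <= g by rewrite -(ler_pM2l h8).
lra.
Qed.
End Ar.

Lemma sum_count_mem_uniq (T : eqType) (s l : seq T) : uniq s ->
  (\sum_(x <- s) count_mem x l)%N = count (mem s) l.
Proof.
move=> us; elim: l => [|z l IH] /=; first by rewrite big1.
rewrite big_split /= IH; congr (_ + _)%N.
rewrite -(count_uniq_mem z us) -sum1_count [RHS]big_mkcond /=.
by apply: eq_bigr => x _; rewrite eq_sym; case: (x == z).
Qed.

Lemma prod_ge (R : realType) (C : fieldType) (absv : C -> R) (hA : is_nonarch_abs absv)
  (l : seq C) (r : R) : 0 <= r -> r <= 1 -> (forall z, z \in l -> r <= absv z) ->
  r ^+ count (fun z => absv z < 1) l <= \prod_(z <- l) absv z.
Proof.
move=> r0 r1; elim: l => [|z l IH] hl; first by rewrite big_nil expr0.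
have IH' := IH (fun w hw => hl w ltac:(by rewrite inE hw orbT)).
have hz : r <= absv z by apply: hl; rewrite inE eqxx.
rewrite big_cons /=; case: (ltP (absv z) 1) => h /=.
  by rewrite add1n exprS; apply: ler_pM => //; apply: exprn_ge0.
rewrite add0n -[X in X <= _]mul1r; apply: ler_pM => //; apply: exprn_ge0 => //.
Qed.

Theorem proposition4p7
  (p : nat) (hp : prime p)
  (R : realType) (C : closedFieldType) (absv : C -> R)
  (hC : is_Cp p absv)
  (K : C -> Prop) (hK : finite_ext_Qp absv K)
  (n : nat) (c : 'I_n -> nat -> C)
  (hc : forall i k, in_OK absv K (c i k))
  (* x = 0 is a simple root of f(0, x) *)
  (hb : mup 0 (f_at0 c) = 1%N)
  (* s lists the distinct roots of f(0,x) in the open unit disk *)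
  (s : seq C) (hs_uniq : uniq s)
  (hs : forall x, x \in s <-> (root (f_at0 c) x /\ absv x < 1))
  (* D_vert = s minus 0 is nonempty *)
  (hDvert : exists x, x \in s /\ x != 0)
  (* e = number of roots in the open unit disk, with multiplicity *)
  (e : nat) (he : e = (\sum_(x <- s) mup x (f_at0 c))%N)
  (* r = |p^{v_vert}| = min over D_vert of |x'| (v_vert = max nu) *)
  (r : R)
  (hr1 : exists x, [/\ x \in s, x != 0 & absv x = r])
  (hr2 : forall x, x \in s -> x != 0 -> r <= absv x) :
  forall t' : C, absv t' < r ^+ e ->
    exists! x' : C, absv x' < r /\ f_vanishes absv c t' x'.
Proof.
move=> t' ht'.
have [hA hcomp _ _] := hC.
have [α [hαs hα0 hαr]] := hr1.
have [hαroot hα1] := (hs α).1 hαs.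
have r1 : r < 1 by rewrite -hαr.
have r0 : 0 < r.
  rewrite -hαr lt_def ab_ge0 // andbT; apply/eqP => /(ab_eq0 hA) h.
  by rewrite h eqxx in hα0.
set F := f_at0 c.
have hFd : F = poly_of (fun i => c i 0%N) by [].
have [rs hrs] := poly_of_split (fun i => c i 0%N).
rewrite -hFd in hrs.
have hFx : forall x, F.[x] = \prod_(z <- rs) (x - z).
  by move=> x; rewrite hrs horner_split.
have rsroot : forall z, z \in rs -> root F z by move=> z; rewrite hrs root_prod_XsubC.
have cnt : forall x, mup x F = count_mem x rs by move=> x; rewrite hrs mu_prod_XsubC.
have h0c : count_mem 0 rs = 1%N by rewrite -cnt.
have h0rs : 0 \in rs by rewrite -has_pred1 has_count h0c.
pose l : seq C := rem 0 rs.
have hperm := perm_to_rem h0rs.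
have hF : forall x, F.[x] = x * \prod_(z <- l) (x - z).
  by move=> x; rewrite hFx (perm_big _ hperm) big_cons subr0.
have l0 : 0 \notin l by apply/count_memPn; rewrite count_mem_rem h0c eqxx.
have hl : forall z : C, z \in l -> r <= absv z.
  move=> z zl; have zrs := mem_rem zl.
  have z0 : z != 0 by apply: contraNneq l0 => <-.
  case: (ltP (absv z) 1) => hz1.
    apply: hr2 => //; apply/hs; split => //; exact: rsroot.
  exact: le_trans (ltW r1) hz1.
set P := \prod_(z <- l) absv z.
set k := count (fun z => absv z < 1) l.
have hcount : e = k.+1.
  rewrite he (eq_bigr (fun x => count_mem x rs)); last by move=> x _; exact: cnt.
  rewrite sum_count_mem_uniq //.
  rewrite (@eq_in_count _ _ (fun z => absv z < 1)); last first.
    move=> z zrs /=; apply/idP/idP => [/hs[]//|h]; apply/hs; split=> //; exact: rsroot.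
  by rewrite (permP hperm) /= (ab0 hA) // ltr01 add1n.
have hPge : r ^+ k <= P by apply: prod_ge => //; apply: ltW.
have hrk : 0 <= r ^+ k by apply: exprn_ge0; apply: ltW.
have hrk1 : r ^+ k * r <= r ^+ k by rewrite -[X in _ <= X]mulr1 ler_wpM2l // ltW.
move: ht'; rewrite hcount exprSr => ht'.
have ht0 := ab_ge0 hA t'.
have hP1 : absv t' < P by lra.
have hP2 : absv t' < r * P by have := ler_wpM2r (ltW r0) hPge; lra.
have P0 : 0 < P by lra.
have ht1 : absv t' < 1 by have := ler_wiXn2l (ltW r0) (ltW r1) (leq0n k); rewrite expr0; lra.
have hc1 : forall i k, absv (c i k) <= 1 by move=> i k'; case: (hc i k').
have hδ : forall d : 'I_n -> C, (forall i, pseries_to absv (c i) t' (d i)) ->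
    forall i, absv (d i - c i 0%N) <= absv t'.
  by move=> d hd i; exact: ps_bound hA _ _ _ (hc1 i) ht1 (hd i).
have hg : forall (d : 'I_n -> C) x,
    (poly_of d).[x] = F.[x] + \sum_(i < n) (d i - c i 0%N) * x ^+ i.
  move=> d x; rewrite hFd !horner_poly_of -addrA -big_split /=; congr (_ + _).
  by apply: eq_bigr => i _; ring.
have hH : forall d : 'I_n -> C, (forall i, absv (d i - c i 0%N) <= absv t') ->
    forall x y, absv x <= 1 -> absv y <= 1 ->
    absv (\sum_(i < n) (d i - c i 0%N) * x ^+ i - \sum_(i < n) (d i - c i 0%N) * y ^+ i)
      <= absv t' * absv (x - y).
  move=> d hd x y hx hy; rewrite -sumrB; apply: (ab_sum hA) => //.
    by apply: mulr_ge0 => //; apply: ab_ge0.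
  move=> i _; rewrite -mulrBr (abM hA).
  have := xpow_diff hA x y i hx hy; have := hd i; have := ab_ge0 hA (x ^+ i - y ^+ i).
  have := ab_ge0 hA (d i - c i 0%N); nra.
have key : forall d : 'I_n -> C, (forall i, absv (d i - c i 0%N) <= absv t') ->
    forall x y, absv x < r -> absv y < r ->
    absv ((poly_of d).[x] - (poly_of d).[y]) = absv (x - y) * P.
  move=> d0 hd0 x y hx hy.
  have [->|xy] := eqVneq x y; first by rewrite !subrr (ab0 hA) // mul0r.
  have xy0 : 0 < absv (x - y).
    rewrite lt_def ab_ge0 // andbT; apply/eqP => /(ab_eq0 hA)/eqP.
    by rewrite subr_eq0 (negPf xy).
  have [Ux Uxy] := est_prod hA l r x y r0 hl hx hy.
  have [Uy _] := est_prod hA l r y y r0 hl hy hy.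
  have hx1 : absv x <= 1 by apply: ltW; apply: lt_trans hx r1.
  have hy1 : absv y <= 1 by apply: ltW; apply: lt_trans hy r1.
  have hHxy := hH d0 hd0 x y hx1 hy1.
  rewrite (hg d0 x) (hg d0 y) (hF x) (hF y).
  move: Ux Uxy hHxy; rewrite -/P.
  set Ax := \prod_(_ <- _) (x - _); set Ay := \prod_(_ <- _) (y - _).
  set Hx := \sum_(_ < _) _ * x ^+ _; set Hy := \sum_(_ < _) _ * y ^+ _.
  move=> Ux Uxy hHxy.
  have -> : x * Ax + Hx - (y * Ay + Hy) = (x - y) * Ax + (y * (Ax - Ay) + (Hx - Hy)).
    by ring.
  rewrite (ab_iso hA) (abM hA) Ux //.
  apply: (abD_lt hA).
    rewrite (abM hA); apply: (@arL1 _ _ _ _ _ _) (ab_ge0 hA _) hy (ab_ge0 hA _) Uxy xy0 P0.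
  apply: le_lt_trans hHxy _; rewrite mulrC ltr_pM2l //.
have [d hd] : exists d : 'I_n -> C, forall i, pseries_to absv (c i) t' (d i).
  apply: (@fin_all_exists _ (fun _ => C) (fun i v => pseries_to absv (c i) t' v)) => i.
  exact: ps_exists hA _ _ hcomp (hc1 i) ht1.
have hdb := hδ d hd.
have fv : forall x, (poly_of d).[x] = 0 -> f_vanishes absv c t' x.
  by move=> x hx; exists d; split => //; rewrite -horner_poly_of.
suff [x [hx hgx]] : exists x, absv x < r /\ (poly_of d).[x] = 0.
  exists x; split; first by split => //; exact: fv.
  move=> y [hy [d' [hd' hy0]]].
  have hy' : (poly_of d).[y] = 0.
    rewrite horner_poly_of -[RHS]hy0; congr (_ + _); apply: eq_bigr => i _.
    by rewrite (ps_unique hA _ _ _ _ (hd i) (hd' i)).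
  have := key d hdb x y hx hy; rewrite hgx hy' subrr (ab0 hA) // => /esym/eqP.
  rewrite mulf_eq0 (gt_eqF P0) orbF => /eqP/(ab_eq0 hA)/eqP.
  by rewrite subr_eq0 => /eqP.
have [bs hbs] := poly_of_split d.
case hhas : (has (fun b => absv b < r) bs).
  have [b bin hb1] := hasP hhas; exists b; split => //.
  by apply/rootP; rewrite hbs root_prod_XsubC.
have hall : forall b, b \in bs -> r <= absv b.
  move=> b bin; rewrite leNgt; apply/negP => hb1.
  by move/negbT: hhas => /hasPn/(_ b bin); rewrite hb1.
have hr00 : absv 0 < r by rewrite (ab0 hA).
have hconst : forall x, absv x < r -> absv (poly_of d).[x] = absv (poly_of d).[0].
  move=> x hx; rewrite hbs !horner_split.
  have [e1 _] := est_prod hA bs r x x r0 hall hx hx; have [e2 _] := est_prod hA bs r 0 0 r0 hall hr00 hr00.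
  by rewrite e1 e2.
set g0 := (poly_of d).[0].
have [g00|g0n] := eqVneq g0 0; first by exists 0; split.
have hg0 : absv g0 <= absv t'.
  rewrite /g0 (hg d 0) (hF 0) mul0r add0r; apply: (ab_sum hA) => // i _; rewrite (abM hA) (abX hA) (ab0 hA) //.
  apply: (@arL2 _ _ _ _) (ab_ge0 hA _) (hdb i) (exprn_ge0 i (lexx (0:R))) (exprn_ile1 i (lexx (0:R)) ler01).
have g0p : 0 < absv g0.
  rewrite lt_def ab_ge0 // andbT; apply/eqP => /(ab_eq0 hA)/eqP; exact/negP.
have [U0 _] := est_prod hA l r 0 0 r0 hl hr00 hr00.
move: U0; rewrite -/P; set u0 := \prod_(_ <- _) (0 - _) => U0.
have u0n : u0 != 0 by apply/eqP => h; move: P0; rewrite -U0 h (ab0 hA) ltxx.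
have [x hx2] := @solve_monicpoly C 2 (fun i => if i == 0%N then α * g0 / u0 else 0) isT.
rewrite big_ord_recr big_ord1 /= mul0r addr0 expr0 mulr1 in hx2.
have habs : absv x ^+ 2 * P = r * absv g0.
  have -> : r * absv g0 = absv (α * g0) by rewrite (abM hA) hαr.
  by rewrite -U0 -(abX hA) // -(abM hA) // hx2 mulfVK.
have hxr : absv x < r := @arL3 _ _ _ _ _ _ (ab_ge0 hA x) habs hg0 hP2 r0 P0.
have := key d hdb x 0 hxr hr00; rewrite subr0 -/g0 => hk.
have hxP : absv x * P <= absv g0.
  rewrite -hk; apply: (abD_le hA) => //; first by rewrite hconst.
  by rewrite (abN hA) // .
exfalso; exact: (@arL4 _ _ _ _ _ _) (ab_ge0 hA x) P0 r0 habs hxP hg0 hP2 g0p.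
Qed.
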